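(* Let $G$ be a cyclic union of component graphs $G_1,\dots,G_m$, and fix legal parameters $\varepsilon,\delta$; let $W=W(G,\varepsilon,\delta)$ and $W_{G_i}=W(G_i,\varepsilon,\delta)$. Then: (i) If some $G_i$ does not have a full-support fixed point, then $G$ does not have a full-support fixed point. (ii) If all $G_i$ have full-support fixed points, and there exists $j$ such that $G_j$ has uniform in-degree and its full-support fixed point is unstable, then $G$ has a full-support fixed point that is unstable. (iii) If all $G_i$ are cliques, then $W$ has a unique fixed point, which has full support, and this fixed point is unstable. In particular, in all these cases $G$ is not a stable motif.
   Context: For a simple directed graph $H$ on $[h]$ and legal parameters ($\delta>0$, $0<\varepsilon<\frac{\delta}{\delta+1}$), the CTLN $W(H,\varepsilon,\delta)$ is the $h\times h$ matrix with zero diagonal, $W_{ij}=-1+\varepsilon$ if $j\to i$ in $H$, $W_{ij}=-1-\delta$ if $i\ne j$ and $j\not\to i$; its dynamics are $\dot x_i=-x_i+[\sum_jW_{ij}x_j+\theta]_+$ with $\theta>0$. CTLNs are assumed nondegenerate ($\det(I-W_\sigma)\ne0$ for all principal submatrices and all Cramer determinants nonzero). A fixed point $x^*\ge0$ has support $\{i:x^*_i>0\}$; a fixed point with support $\sigma$ is stable iff all eigenvalues of $I-W_\sigma$ have positive real part, otherwise unstable. ''$H$ has a full-support fixed point'' means its CTLN has a fixed point with support all of $[h]$. $H$ is a stable motif if it has a full-support fixed point that is stable. A cyclic union of $G_1,\dots,G_m$ is the graph on the disjoint union of their vertex sets, keeping all edges within each $G_i$, adding all edges from every node of $G_i$ to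 every node of $G_{i+1}$ (indices mod $m$), and no other edges. A graph has uniform in-degree if all its nodes have the same in-degree. A clique is a graph in which every pair of nodes is bidirectionally connected. *)

(* Defs.v *)
From HB Require Import structures.
From mathcomp Require Import all_boot all_order all_algebra.
From mathcomp Require Import reals complex.
Set Implicit Arguments. Unset Strict Implicit. Unset Printing Implicit Defensive.
Import Order.TTheory GRing.Theory Num.Theory.
Local Open Scope ring_scope.

(* A directed graph on a finite vertex type V is a relation G : rel V,
   where [G j i] means there is an edge j -> i. *)

Section CTLN.
Variables (R : realType) (V : finType).

Definition simple_graph (G : rel V) : Prop := forall i, G i i = false.

Definition legal_params (eps delta : R) : Prop :=
  0 < delta /\ 0 < eps /\ eps < delta / (delta + 1).

Definition ctln (G : rel V) (eps delta : R) (i j : V) : R :=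
  if i == j then 0
  else if G j i then -1 + eps else -1 - delta.

(* Fixed point of  dx_i/dt = -x_i + [sum_j W_ij x_j + theta]_+ *)
Definition is_fixed_point (W : V -> V -> R) (theta : R) (x : V -> R) : Prop :=
  (forall i, 0 <= x i) /\
  (forall i, x i = Num.max 0 (\sum_j W i j * x j + theta)).

Definition supp (x : V -> R) : {set V} := [set i | 0 < x i].

Definition subW (W : V -> V -> R) (sigma : {set V}) : 'M[R]_#|sigma| :=
  \matrix_(i, j) W (enum_val i) (enum_val j).

(* Cramer matrix: column k of (I - W_sigma) replaced by b_sigma = theta*1 *)
Definition cramer_mx (W : V -> V -> R) (theta : R) (sigma : {set V})
  (k : 'I_#|sigma|) : 'M[R]_#|sigma| :=
  \matrix_(i, j) (if j == k then theta else (1%:M - subW W sigma) i j).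

Definition ctln_nondegenerate (W : V -> V -> R) (theta : R) : Prop :=
  forall sigma : {set V}, sigma != set0 ->
    \det (1%:M - subW W sigma) != 0 /\
    forall k : 'I_#|sigma|, \det (@cramer_mx W theta sigma k) != 0.

End CTLN.

Definition pos_real_part_spectrum (R : rcfType) (n : nat) (M : 'M[R]_n) : Prop :=
  forall z : R[i], eigenvalue (map_mx (fun r : R => (r%:C)%C) M) z -> 0 < complex.Re z.

Section CTLN2.
Variables (R : realType) (V : finType).

Definition stable_fp (W : V -> V -> R) (x : V -> R) : Prop :=
  pos_real_part_spectrum (1%:M - subW W (supp x)).

Definition full_support (x : V -> R) : Prop := forall i, 0 < x i.

Definition has_full_support_fp (G : rel V) (eps delta theta : R) : Prop :=
  exists x, is_fixed_point (ctln G eps delta) theta x /\ full_support x.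

Definition stable_motif (G : rel V) (eps delta theta : R) : Prop :=
  exists x, [/\ is_fixed_point (ctln G eps delta) theta x, full_support x
             & stable_fp (ctln G eps delta) x].

Definition uniform_in_degree (G : rel V) : Prop :=
  exists d : nat, forall i, #|[set j | G j i]| = d.

Definition is_clique (G : rel V) : Prop := forall i j, i != j -> G i j /\ G j i.

End CTLN2.

(* Components of a graph given by a partition map into 'I_m :
   G_k is the induced subgraph on the k-th cu_block. *)
Definition cu_block (V : finType) (m : nat) (part : V -> 'I_m) (k : 'I_m) :=
  {v : V | part v == k}.

Definition cu_component (V : finType) (m : nat) (part : V -> 'I_m) (G : rel V)
  (k : 'I_m) : rel (cu_block part k) :=
  fun a b => G (val a) (val b).

Definition cyclic_union (V : finType) (m : nat) (part : V -> 'I_m) (G : rel V)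
  : Prop :=
  (forall k : 'I_m, exists v, part v = k) /\
  (forall u v, part u != part v ->
     G u v = (val (part v) == (val (part u)).+1 %% m)%N).

Arguments cu_component {V m} part G k.
Arguments cu_block {V m} part k.
Arguments cyclic_union {V m} part G.

(* Main.v *)
Require Import Defs.
From HB Require Import structures.
From mathcomp Require Import all_boot all_order all_algebra.
From mathcomp Require Import reals complex.
From mathcomp Require Import spectral mxred.
From mathcomp Require Import ring lra.
From Stdlib Require Import Classical IndefiniteDescription.
Import Order.TTheory GRing.Theory Num.Theory.
Local Open Scope ring_scope.
Set Implicit Arguments. Unset Strict Implicit. Unset Printing Implicit Defensive.
From mathcomp Require Import zify.

Section Gen.
Lemma conj_tr (F : fieldType) n (P A : 'M[F]_n) : P \in unitmx ->
  \tr (P *m A *m invmx P) = \tr A.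
Proof. by move=> Pu; rewrite mxtrace_mulC mulmxA mulVmx // mul1mx. Qed.

Lemma conj_sq (F : fieldType) n (P A : 'M[F]_n) : P \in unitmx ->
  (P *m A *m invmx P) *m (P *m A *m invmx P) = P *m (A *m A) *m invmx P.
Proof. by move=> Pu; rewrite !mulmxA mulmxKV // -!mulmxA. Qed.

Lemma trig_tr2 (K : comNzRingType) n (T : 'M[K]_n) : is_trig_mx T ->
  \tr (T *m T) = \sum_i T i i ^+ 2.
Proof.
move=> Tt; rewrite /mxtrace; apply: eq_bigr => i _; rewrite mxE (bigD1 i) //= big1 ?addr0 ?expr2 //.
move=> j ji; case: (ltngtP i j) => [ij|ji'|/val_inj e]; last by rewrite e eqxx in ji.
  by rewrite (is_trig_mxP Tt i j ij) mul0r.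
by rewrite (is_trig_mxP Tt j i ji') mulr0.
Qed.

Lemma conj_eig (F : fieldType) n (P A : 'M[F]_n) a : P \in unitmx ->
  eigenvalue (P *m A *m invmx P) a -> eigenvalue A a.
Proof.
move=> Pu /eigenvalueP [v hv vn0]; apply/eigenvalueP; exists (v *m P).
  have TP : P *m A *m invmx P *m P = P *m A by rewrite mulmxKV.
  by rewrite -mulmxA -TP mulmxA hv scalemxAl.
by rewrite mulmx_free_eq0 ?row_free_unit.
Qed.

Lemma trig_eig (F : fieldType) n (T : 'M[F]_n) i : is_trig_mx T -> eigenvalue T (T i i).
Proof.
move=> Tt; rewrite eigenvalue_root_char char_poly_trig // rootE horner_prod.
by apply/eqP; rewrite (bigD1 i) //= hornerXsubC subrr mul0r.
Qed.

Lemma sum_sq_lt (R : realFieldType) n (x : 'I_n -> R) : (1 < n)%N ->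
  (forall i, 0 < x i) -> \sum_i x i ^+ 2 < (\sum_i x i) ^+ 2.
Proof.
move=> n2 xpos; have n0 : (0 < n)%N by apply: ltnW.
have xlt : forall i, x i < \sum_j x j.
  move=> i; rewrite (bigD1 i) // ltrDl.
  pose o0 : 'I_n := Ordinal n0; pose o1 : 'I_n := Ordinal n2.
  have [j ji] : exists j, j != i.
    case: (eqVneq i o0) => [->|]; last by exists o0; rewrite eq_sym.
    by exists o1; apply/eqP => /(congr1 val).
  rewrite (bigD1 j) // ltr_pwDl ?xpos // sumr_ge0 // => k _; exact: ltW.
rewrite expr2 mulr_suml; apply: ltr_sum; first by apply/hasP; exists (Ordinal n0); rewrite ?mem_index_enum.
by move=> i _; rewrite expr2 ltr_pM2l.
Qed.
End Gen.

Section Crit.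
Variable R : rcfType.

Lemma Re_add (x y : R[i]) : complex.Re (x + y) = complex.Re x + complex.Re y.
Proof. by case: x; case: y. Qed.

Lemma Re_sum (I : finType) (F : I -> R[i]) :
  complex.Re (\sum_i F i) = \sum_i complex.Re (F i).
Proof. by apply: (big_morph _ Re_add). Qed.

Lemma Re_sqr_le (z : R[i]) : complex.Re (z ^+ 2) <= complex.Re z ^+ 2.
Proof. case: z => a b; rewrite !expr2 /=. nra. Qed.

Lemma Re_real (r : R) : complex.Re ((r%:C)%C) = r.
Proof. by []. Qed.

Lemma crit n (M : 'M[R]_n) : (1 < n)%N -> \tr M ^+ 2 <= \tr (M *m M) ->
  exists z : R[i], eigenvalue (map_mx (fun r : R => (r%:C)%C) M) z /\ complex.Re z <= 0.
Proof.
move=> n2 htr.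
set A := map_mx _ M.
case: (classic (exists z : R[i], eigenvalue A z /\ complex.Re z <= 0)) => // hno.
exfalso.
have H : forall z, eigenvalue A z -> 0 < complex.Re z.
  move=> z ez; rewrite ltNge; apply/negP => hz; apply: hno; by exists z.
have n0 : (0 < n)%N by apply: ltnW.
have [P Pu] := Schur A n0.
have Pi : P \in unitmx by apply: unitarymx_unit.
rewrite /similar_to /mxred.conjmx pinvmxE // => Ttrig.
have eigT : forall i, eigenvalue A ((P *m A *m invmx P) i i).
  by move=> i; apply: (conj_eig Pi); apply: trig_eig.
have trA : \tr A = ((\tr M)%:C)%C by rewrite /A trace_map_mx.
have trA2 : \tr (A *m A) = ((\tr (M *m M))%:C)%C by rewrite /A -map_mxM trace_map_mx.
set x := fun i => complex.Re ((P *m A *m invmx P) i i).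
have xpos : forall i, 0 < x i by move=> i; apply: H.
have e1 : \tr M = \sum_i x i.
  by rewrite -[\tr M]Re_real -trA -(conj_tr _ Pi) /mxtrace Re_sum.
have e2 : \tr (M *m M) <= \sum_i x i ^+ 2.
  rewrite -[\tr (M *m M)]Re_real -trA2 -(conj_tr _ Pi) -conj_sq // trig_tr2 // Re_sum.
  by apply: ler_sum => i _; apply: Re_sqr_le.
have := sum_sq_lt n2 xpos.
rewrite -e1.
move: htr e2; lra.
Qed.
End Crit.

Lemma sum_enum (T : finType) (K : nmodType) (F : T -> K) :
  \sum_t F t = \sum_(i < #|[set: T]|) F (enum_val i).
Proof.
rewrite -big_enum_val /=. apply: eq_bigl => t; by rewrite inE.
Qed.

Section Eig.
Variables (R : realType) (T : finType).

Definition eigfun (Wt : T -> T -> R) (l : R[i]) :=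
  exists u : T -> R[i], (exists t, u t != 0) /\
    forall c, \sum_t u t * ((((t == c)%:R - Wt t c)%:C)%C) = l * u c.

Lemma subW_entry (Wt : T -> T -> R) (i j : 'I_#|[set: T]|) :
  (1%:M - subW Wt [set: T]) i j = (enum_val i == enum_val j)%:R - Wt (enum_val i) (enum_val j).
Proof.
rewrite !mxE; congr (_ - _).
by rewrite (inj_eq enum_val_inj).
Qed.

Lemma eig_of_fun Wt l : eigfun Wt l ->
  eigenvalue (map_mx (fun r : R => (r%:C)%C) (1%:M - subW Wt [set: T])) l.
Proof.
case=> u [[t ut] hu]; apply/eigenvalueP.
exists (\row_i u (enum_val i)).
  apply/rowP => j; rewrite !mxE.
  have := hu (enum_val j).
  rewrite sum_enum.
  move=> <-; apply: eq_bigr => i _; rewrite !mxE.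
  by rewrite (inj_eq enum_val_inj).
apply/eqP => /rowP /(_ (enum_rank_in (in_setT t) t)).
rewrite !mxE enum_rankK_in ?in_setT // => e; by rewrite e eqxx in ut.
Qed.

Lemma fun_of_eig Wt l :
  eigenvalue (map_mx (fun r : R => (r%:C)%C) (1%:M - subW Wt [set: T])) l -> eigfun Wt l.
Proof.
case/eigenvalueP => v hv vn0.
pose u t := v 0 (enum_rank_in (in_setT t) t).
have hu : forall i, u (enum_val i) = v 0 i.
  move=> i; rewrite /u; congr (v 0 _).
  by apply: enum_val_inj; rewrite enum_rankK_in ?in_setT.
exists u; split.
  have [i vi] : exists i, v 0 i != 0.
    apply/existsP; apply: contraR vn0 => /existsPn h.
    by apply/eqP/rowP => i; rewrite mxE; apply/eqP; move: (h i); rewrite negbK.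
  by exists (enum_val i); rewrite hu.
move=> c.
move/rowP: hv => /(_ (enum_rank_in (in_setT c) c)).
rewrite !mxE -[v 0 (enum_rank_in _ c)]/(u c) => <-.
rewrite sum_enum.
apply: eq_bigr => i _; rewrite hu !mxE enum_rankK_in ?in_setT //.
rewrite -(inj_eq enum_val_inj) enum_rankK_in ?in_setT //.
Qed.

Lemma supp_full (x : T -> R) : full_support x -> supp x = [set: T].
Proof. by move=> hx; apply/setP => i; rewrite !inE hx. Qed.

Lemma unstable_of_eig Wt x l : full_support x -> eigfun Wt l -> complex.Re l <= 0 ->
  ~ stable_fp Wt x.
Proof.
move=> hx he hl; rewrite /stable_fp supp_full // => hs.
have := hs l (eig_of_fun he); rewrite ltNge hl //.
Qed.

Lemma eig_of_unstable Wt x : full_support x -> ~ stable_fp Wt x ->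
  exists l, eigfun Wt l /\ complex.Re l <= 0.
Proof.
move=> hx; rewrite /stable_fp supp_full // => hs.
case: (classic (exists l, eigfun Wt l /\ complex.Re l <= 0)) => // hno.
exfalso; apply: hs => z ez; rewrite ltNge; apply/negP => hz; apply: hno.
by exists z; split => //; apply: fun_of_eig.
Qed.
End Eig.

Section Cyc.
Variable R : realType.

Definition Dd (t : R) : R := if t < 0 then - t else if t <= 1 then 0 else t - 1.

Lemma Dd_ge0 t : 0 <= Dd t.
Proof. rewrite /Dd; case: (ltrP t 0) => h1; first lra.
case: (lerP t 1) => h2; lra. Qed.

Lemma Dd0 t : Dd t <= 0 -> 0 <= t <= 1.
Proof.
rewrite /Dd; case: (ltrP t 0) => h1 h; first by apply/andP; split; lra.
case: (lerP t 1) => h2 in h *; apply/andP; split; lra.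
Qed.

Lemma Ddg (r t : R) : 0 < r < 1 -> Dd (1 - r * t) <= r * Dd t.
Proof.
move=> /andP[r0 r1]; rewrite /Dd.
case: (ltrP t 0) => h1.
  have rt : r * t < 0 by rewrite pmulr_rlt0.
  case: (ltrP (1 - r * t) 0) => h; first lra.
  case: (lerP (1 - r * t) 1) => h'; first lra.
  rewrite mulrN; lra.
case: (lerP t 1) => h2.
  have rt : 0 <= r * t by rewrite mulr_ge0 // ltW.
  have rt1 : r * t <= 1 by rewrite -(mulr1 1) ler_pM // ltW.
  case: (ltrP (1 - r * t) 0) => h; first lra.
  case: (lerP (1 - r * t) 1) => h'; first lra.
  lra.
have rt : r * t - r <= r * t - r by [].
have rt0 : 0 <= r * t by rewrite mulr_ge0 // ltW //; apply: le_trans h2; apply: ler01.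
case: (ltrP (1 - r * t) 0) => h; first by rewrite mulrBr mulr1; lra.
case: (lerP (1 - r * t) 1) => h'; first by rewrite mulr_ge0 // ?subr_ge0 ltW.
lra.
Qed.

Lemma cyc_exists m (r : 'I_m -> R) : (1 < m)%N -> (forall k, 0 < r k < 1) ->
  exists w : 'I_m -> R, [/\ forall k, 0 < w k,
    forall k, r k * w k + w (ord_pred k) = 1 & 1 < \sum_k w k].
Proof.
move=> m2 hr.
have m0 : (0 < m)%N by apply: ltnW.
pose i0 : 'I_m := Ordinal m0.
pose N : 'M[R]_m := \matrix_(j, k) ((j == k)%:R * r k + (j == ord_pred k)%:R).
have rowN : forall (u : 'rV_m) k, (u *m N) 0 k = r k * u 0 k + u 0 (ord_pred k).
  move=> u k; rewrite !mxE.
  under eq_bigr do rewrite mxE mulrDr.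
  rewrite big_split /=; congr (_ + _).
    rewrite (bigD1 k) //= eqxx big1 => [|j /negbTE ->]; last by rewrite mul0r mulr0.
    by rewrite addr0 mul1r mulrC.
  rewrite (bigD1 (ord_pred k)) //= eqxx big1 ?addr0 ?mulr1 //.
  by move=> j /negbTE ->; rewrite mulr0.
have inj : forall u : 'rV_m, u *m N = 0 -> u = 0.
  move=> u hu.
  pose f k := `|u 0 k|.
  case: (@arg_maxP _ _ _ i0 predT f erefl) => j _ hj.
  have e := rowN u (ordS j); rewrite hu ordSK mxE in e.
  have /andP[hr0 hr1] := hr (ordS j).
  have e2 : `|u 0 j| = r (ordS j) * `|u 0 (ordS j)|.
    have -> : u 0 j = - (r (ordS j) * u 0 (ordS j)).
      by apply/eqP; rewrite -subr_eq0 opprK addrC e.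
    by rewrite normrN normrM ger0_norm // ltW.
  have hm : `|u 0 (ordS j)| <= `|u 0 j| := hj (ordS j) erefl.
  have h3 : r (ordS j) * `|u 0 (ordS j)| <= r (ordS j) * `|u 0 j| by rewrite ler_pM2l.
  have h4 : (1 - r (ordS j)) * `|u 0 j| <= 0 by rewrite mulrBl mul1r; lra.
  have fj0 : `|u 0 j| <= 0 by move: h4; rewrite pmulr_rle0 // subr_gt0.
  apply/rowP => k; rewrite mxE; apply/eqP; rewrite -normr_le0.
  exact: le_trans (hj k erefl) fj0.
have Nu : N \in unitmx.
  rewrite unitmxE unitfE; apply/negP => /det0P [v vn0 hv].
  by rewrite (inj v hv) eqxx in vn0.
pose z := (const_mx 1 : 'rV[R]_m) *m invmx N.
have hz : z *m N = const_mx 1 by rewrite /z mulmxKV.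
pose w k := z 0 k.
have eqw : forall k, r k * w k + w (ord_pred k) = 1.
  by move=> k; rewrite /w -rowN hz mxE.
have Dw : forall k, Dd (w (ord_pred k)) <= r k * Dd (w k).
  move=> k; have -> : w (ord_pred k) = 1 - r k * w k.
    by rewrite -(eqw k) addrC addKr.
  exact: Ddg.
case: (@arg_maxP _ _ _ i0 predT (fun k => Dd (w k)) erefl) => j _ hj.
have hj0 : Dd (w j) <= 0.
  have := Dw (ordS j); rewrite ordSK => h.
  have hm : Dd (w (ordS j)) <= Dd (w j) := hj (ordS j) erefl.
  have /andP[hr0 hr1] := hr (ordS j).
  have h3 : r (ordS j) * Dd (w (ordS j)) <= r (ordS j) * Dd (w j) by rewrite ler_pM2l.
  have h4 : (1 - r (ordS j)) * Dd (w j) <= 0 by rewrite mulrBl mul1r; lra.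
  by move: h4; rewrite pmulr_rle0 // subr_gt0.
have win : forall k, 0 <= w k <= 1.
  by move=> k; apply: Dd0; apply: le_trans (hj k erefl) hj0.
have wpos : forall k, 0 < w k.
  move=> k; have := eqw (ordS k); rewrite ordSK => e.
  have /andP[w0 w1] := win (ordS k); have /andP[hr0 hr1] := hr (ordS k).
  have : r (ordS k) * w (ordS k) <= r (ordS k) by rewrite -{2}(mulr1 (r _)) ler_pM2l.
  lra.
exists w; split => //.
have : \sum_k (r k * w k + w (ord_pred k)) = m%:R.
  by under eq_bigr do rewrite eqw; rewrite sumr_const card_ord.
have sp : \sum_k w k = \sum_k w (ord_pred k) := reindex_inj (can_inj (@ord_predK m)).
rewrite big_split /= -sp.
move=> e.
have lt : \sum_k r k * w k < \sum_k w k.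
  apply: ltr_sum; first by apply/hasP; exists i0; rewrite ?mem_index_enum.
  move=> k _; have /andP[hr0 hr1] := hr k.
  by rewrite -subr_gt0 -{1}(mul1r (w k)) -mulrBl mulr_gt0 ?subr_gt0 ?wpos.
have m2R : 2 <= m%:R :> R by rewrite (ler_nat R 2 m).
lra.
Qed.
End Cyc.

Lemma pred_neq m (k : 'I_m) : (1 < m)%N -> ord_pred k != k.
Proof.
move=> m2; apply/eqP => e.
have : ordS k = k by rewrite -{1}e ord_predK.
move/(congr1 val) => /=; move: (ltn_ord k); move: (nat_of_ord k) => n hn.
case: (ltnP n.+1 m) => h.
  by rewrite modn_small // => /esym /eqP; rewrite eqn_leq ltnn andbF.
have -> : n.+1 = m by apply/eqP; rewrite eqn_leq h hn.
rewrite modnn => n0; move: h m2; rewrite -n0 => h1 h2.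
by have := leq_ltn_trans h1 h2; rewrite ltnn.

Qed.
Lemma pred_iff m (l k : 'I_m) : (val k == ((val l).+1 %% m)%N) = (l == ord_pred k).
Proof.
rewrite -[((val l).+1 %% m)%N]/(val (ordS l)) val_eqE.
apply/eqP/eqP => [->|->]; [by rewrite ordSK | by rewrite ord_predK].
Qed.
Lemma pp_neq m (k : 'I_m) : (2 < m)%N -> ord_pred (ord_pred k) != k.
Proof.
move=> m3; apply/eqP => e.
have : ordS (ordS k) = k by rewrite -{1}e !ord_predK.
move/(congr1 val) => /=; rewrite -[((_ %% m).+1)%N]addn1 modnDml addn1; move: (ltn_ord k) m3; move: (nat_of_ord k) => n.
move=> hn m3 h.
case: (ltnP n.+2 m) => h2.
  by move: h; rewrite modn_small // => /eqP; rewrite -addn2 -{2}[n]addn0 eqn_add2l.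
have e2 : n.+2 = (m + (n.+2 - m))%N by rewrite subnKC.
move: h; rewrite e2 modnDl modn_small; last by lia.
lia.
Qed.
Lemma iter_ordS m (k : 'I_m) n : val (iter n (@ordS m) k) = ((val k + n) %% m)%N.
Proof.
elim: n => [|n IH] /=; first by rewrite addn0 modn_small.
rewrite IH -[((_ %% m).+1)%N]addn1 modnDml addn1 addnS //.
Qed.

Lemma boundary m (P : pred 'I_m) : (exists k, P k) -> (exists k, ~~ P k) ->
  exists k, P k /\ ~~ P (ord_pred k).
Proof.
move=> [k1 h1] [k0 h0].
case: (boolP [exists k, P k && ~~ P (ord_pred k)]) => [/existsP [k /andP [a b]]|/existsPn H].
  by exists k.
have step : forall j, ~~ P j -> ~~ P (ordS j).
  move=> j hj; apply/negP => hs; have := H (ordS j); rewrite hs ordSK /=.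
  by rewrite (negbTE hj).
have it : forall n, ~~ P (iter n (@ordS m) k0).
  by elim=> [|n IH] //=; apply: step.
have e : iter (m - k0 + k1) (@ordS m) k0 = k1.
  apply: val_inj; rewrite iter_ordS addnA subnKC; last exact: ltnW (ltn_ord k0).
  by rewrite modnDl modn_small.
by move: (it (m - k0 + k1)%N); rewrite e h1.
Qed.

Section Main.
Variables (R : realType) (V : finType) (m : nat) (part : V -> 'I_m) (G : rel V)
  (eps delta theta : R).
Hypotheses (Gs : simple_graph G) (cu : cyclic_union part G)
  (lp : legal_params eps delta) (th0 : 0 < theta).

Local Notation W := (ctln G eps delta).
Local Notation B k := (cu_block part k).
Local Notation Wk k := (ctln (cu_component part G k) eps delta).

Lemma d0 : 0 < delta. Proof. by case: lp. Qed.
Lemma e0 : 0 < eps. Proof. by case: lp => _ []. Qed.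
Lemma ed : eps * (delta + 1) < delta.
Proof.
case: lp => hd [he hl]; rewrite -ltr_pdivlMr //.
by apply: ltr_wpDl => //; apply: ltW.
Qed.
Lemma e1 : eps < 1.
Proof. have := ed; have := d0; have := e0; nra. Qed.

Definition wc (l k : 'I_m) : R :=
  if val k == ((val l).+1 %% m)%N then -1 + eps else -1 - delta.

Lemma W_cross i j : part i != part j -> W i j = wc (part j) (part i).
Proof.
move=> hij; rewrite /ctln /wc.
have -> : (i == j) = false by apply: contraNF hij => /eqP ->.
by rewrite cu.2 // eq_sym.
Qed.

Lemma Wk_val k (a b : B k) : Wk k a b = W (val a) (val b).
Proof. by rewrite /ctln /cu_component -val_eqE. Qed.

Lemma W_le0 i j : W i j <= 0.
Proof.
have := e1; have := d0; rewrite /ctln => h1 h2; case: (i == j) => //; case: (G j i); lra.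
Qed.

Lemma W_ge i j : i != j -> - 1 - delta <= W i j <= - 1 + eps.
Proof.
move=> ij; have := e0; have := d0; rewrite /ctln (negbTE ij).
move=> h1 h2; case: (G j i); apply/andP; split; lra.
Qed.

Lemma sum_blocks (K : nmodType) (F : V -> K) :
  \sum_v F v = \sum_(l : 'I_m) \sum_(b : B l) F (val b).
Proof.
rewrite (partition_big part predT) //=; apply: eq_bigr => l _.
by rewrite (big_sub [pred v | part v == l]).
Qed.

Definition bmass (l : 'I_m) (y : V -> R) := \sum_(b : B l) y (val b).

Definition ext (k : 'I_m) (y : V -> R) :=
  \sum_(l | l != k) wc l k * bmass l y.

Lemma split_row k v (y : V -> R) : part v = k ->
  \sum_j W v j * y j = \sum_(b : B k) W v (val b) * y (val b) + ext k y.
Proof.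
move=> hv; rewrite sum_blocks (bigD1 k) //=; congr (_ + _).
apply: eq_bigr => l lk; rewrite /bmass mulr_sumr; apply: eq_bigr => b _.
have hb : part (val b) = l by apply/eqP; apply: (valP b).
by rewrite W_cross ?hb ?hv // eq_sym.
Qed.

Lemma fp_eq (T : finType) (Wt : T -> T -> R) x : is_fixed_point Wt theta x ->
  full_support x -> forall v, x v = \sum_j Wt v j * x j + theta.
Proof.
move=> [_ hf] hx v; move: (hx v) (hf v).
case: (lerP 0 (\sum_j Wt v j * x j + theta)) => h xv e //.
by rewrite e ltxx in xv.
Qed.

Lemma fp_of_eq (T : finType) (Wt : T -> T -> R) x : full_support x ->
  (forall v, x v = \sum_j Wt v j * x j + theta) -> is_fixed_point Wt theta x.
Proof.
move=> hx he; split => [v|v]; first exact: ltW.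
rewrite -he; case: lerP => // h; have := hx v.
by rewrite ltNge ltW.
Qed.

Lemma block_ne k : exists b : B k, True.
Proof. by have [v hv] := cu.1 k; exists (exist _ v (introT eqP hv)). Qed.

Lemma part_i : (exists k : 'I_m, ~ has_full_support_fp (cu_component part G k) eps delta theta) ->
      ~ has_full_support_fp G eps delta theta.
Proof.
case=> k hk [x [fx hx]]; apply: hk.
have [b0 _] := block_ne k.
pose tk := theta + ext k x.
have rowk : forall b : B k, x (val b) = \sum_(c : B k) W (val b) (val c) * x (val c) + tk.
  move=> b; have := fp_eq fx hx (val b).
  by rewrite (split_row _ (eqP (valP b))) /tk => ->; rewrite -!addrA (addrC theta).
have tk0 : 0 < tk.
  have := rowk b0; set s := \sum_(c : B k) _ => e.
  have : s <= 0 by apply: sumr_le0 => c _; apply: mulr_le0_ge0; [apply: W_le0|apply: ltW].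
  have := hx (val b0); lra.
exists (fun b : B k => x (val b) * (theta / tk)); split; last first.
  by move=> b; apply: mulr_gt0 => //; apply: divr_gt0.
apply: fp_of_eq => [b|b]; first by apply: mulr_gt0 => //; apply: divr_gt0.
have -> : \sum_j Wk k b j * (x (val j) * (theta / tk)) =
   (\sum_(c : B k) W (val b) (val c) * x (val c)) * (theta / tk).
  by rewrite mulr_suml; apply: eq_bigr => c _; rewrite Wk_val mulrA.
rewrite {1}rowk mulrDl; congr (_ + _); rewrite mulrCA divff ?mulr1 //.
exact: lt0r_neq0.
Qed.



Lemma bounds k (X : V -> R) : (forall v, 0 < X v) ->
  (forall b : B k, X (val b) = \sum_(c : B k) W (val b) (val c) * X (val c) + theta) ->
  (1 - eps) * bmass k X < theta < (1 + delta) * bmass k X.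
Proof.
move=> Xp Xeq; have [b0 _] := block_ne k.
pose Sr := \sum_(c : B k | c != b0) X (val c).
have hS : bmass k X = X (val b0) + Sr by rewrite /bmass (bigD1 b0).
pose Tr := \sum_(c : B k | c != b0) W (val b0) (val c) * X (val c).
have hT : \sum_(c : B k) W (val b0) (val c) * X (val c) = Tr.
  by rewrite (bigD1 b0) //= /ctln eqxx mul0r add0r.
have lo : (- 1 - delta) * Sr <= Tr.
  rewrite /Sr mulr_sumr; apply: ler_sum => c cb; apply: ler_wpM2r; first exact: ltW.
  have hne : val b0 != val c by rewrite val_eqE eq_sym.
  by case/andP: (W_ge hne).
have up : Tr <= (- 1 + eps) * Sr.
  rewrite /Sr mulr_sumr; apply: ler_sum => c cb; apply: ler_wpM2r; first exact: ltW.
  have hne : val b0 != val c by rewrite val_eqE eq_sym.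
  by case/andP: (W_ge hne).
have e := Xeq b0; rewrite hT in e.
have := Xp (val b0); have := e0; have := d0.
have Sr0 : 0 <= Sr by apply: sumr_ge0 => c _; apply: ltW.
rewrite hS => h1 h2 h3; apply/andP; split; nra.
Qed.

Lemma bmass_pos k (X : V -> R) : (forall v, 0 < X v) -> 0 < bmass k X.
Proof.
move=> Xp; have [b0 _] := block_ne k; rewrite /bmass (bigD1 b0) //=.
by rewrite ltr_pwDl // sumr_ge0 // => c _; apply: ltW.
Qed.

Lemma wc_dec l k : wc l k = - 1 - delta + (l == ord_pred k)%:R * (delta + eps).
Proof. by rewrite /wc pred_iff; case: (l == ord_pred k); rewrite ?mul1r ?mul0r; lra. Qed.

Lemma build_gen (X : V -> R) (alpha : 'I_m -> R) : (forall v, 0 < X v) ->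
  (forall k (b : B k), X (val b) = \sum_(c : B k) W (val b) (val c) * X (val c) + theta) ->
  (forall k, 0 < alpha k) ->
  (forall k, theta * (1 - alpha k) + \sum_(l | l != k) wc l k * (alpha l * bmass l X) = 0) ->
  exists x, is_fixed_point W theta x /\ full_support x.
Proof.
move=> Xp Xeq ap heq.
pose x v := alpha (part v) * X v.
have xp : full_support x by move=> v; apply: mulr_gt0.
exists x; split => //; apply: fp_of_eq => // v.
set k := part v.
pose b : B k := exist (fun w => part w == k) v (eqxx k).
rewrite (split_row _ (erefl k)).
have -> : \sum_(c : B k) W v (val c) * x (val c) =
          alpha k * \sum_(c : B k) W v (val c) * X (val c).
  rewrite mulr_sumr; apply: eq_bigr => c _; rewrite /x (eqP (valP c)); ring.
have -> : ext k x = \sum_(l | l != k) wc l k * (alpha l * bmass l X).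
  apply: eq_bigr => l _; congr (_ * _); rewrite /bmass mulr_sumr.
  by apply: eq_bigr => c _; rewrite /x (eqP (valP c)).
have e := Xeq k b; rewrite /= in e.
have := heq k; rewrite /x -/k.
move: e; set s := \sum_(c : B k) _; set t := \sum_(l | l != k) _ => e h.
rewrite {1}e; lra.
Qed.

Lemma build_fp (X : V -> R) : (forall v, 0 < X v) ->
  (forall k (b : B k), X (val b) = \sum_(c : B k) W (val b) (val c) * X (val c) + theta) ->
  exists x, is_fixed_point W theta x /\ full_support x.
Proof.
move=> Xp Xeq.
case: (ltnP 1 m) => hm; last first.
  apply: (build_gen (alpha := fun _ => 1)) => // k.
  rewrite subrr mulr0 add0r big_pred0 // => l.
  apply/negbTE; rewrite negbK; apply/eqP/val_inj.
  case: l => a ha; case: k => c hc /=; move: hm ha hc; lia.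
set b := delta + eps.
have b0 : 0 < b by rewrite /b addr_gt0 ?d0 ?e0.
have bd : b < 1 + delta by rewrite /b; have := e1; lra.
pose S k := bmass k X.
have Sp : forall k, 0 < S k by move=> k; apply: bmass_pos.
pose r k := ((1 + delta) - theta / S k) / b.
have hr : forall k, 0 < r k < 1.
  move=> k; have /andP[h1 h2] := bounds Xp (Xeq k).
  have SS := Sp k.
  have q1 : 1 - eps < theta / S k by rewrite ltr_pdivlMr.
  have q2 : theta / S k < 1 + delta by rewrite ltr_pdivrMr.
  apply/andP; split; first by rewrite divr_gt0 // subr_gt0.
  by rewrite ltr_pdivrMr // mul1r /b; lra.
have [w [wp weq wsum]] := cyc_exists hm hr.
pose z k := w k / b.
pose Z := \sum_k z k.
have hZ : Z = (\sum_k w k) / b by rewrite /Z mulr_suml.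
have bZ : 1 < b * Z by rewrite hZ mulrCA divff ?mulr1 // gt_eqF.
pose D := (1 + delta) * Z - 1.
have Z0 : 0 < Z by rewrite hZ divr_gt0 // (lt_trans ltr01 wsum).
have D0 : 0 < D.
  rewrite /D subr_gt0; apply: lt_trans bZ _; rewrite ltr_pM2r //.
pose C := theta / D.
have C0 : 0 < C by apply: divr_gt0.
have CD : C * D = theta by rewrite /C mulrVK // unitfE gt_eqF.
pose alpha k := C * z k / S k.
have key : forall k, ((1 + delta) - theta / S k) * z k + b * z (ord_pred k) = 1.
  move=> k; transitivity (r k * w k + w (ord_pred k)); last exact: weq k.
  rewrite /r /z; congr (_ + _); first by rewrite mulrA mulrAC.
  by rewrite mulrC divfK // gt_eqF.
apply: (build_gen (alpha := alpha)) => // [k|k].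
  by rewrite /alpha divr_gt0 // mulr_gt0 // /z divr_gt0.
have -> : \sum_(l | l != k) wc l k * (alpha l * bmass l X) =
          \sum_(l | l != k) ((- 1 - delta) * (C * z l) + (l == ord_pred k)%:R * (b * (C * z l))).
  apply: eq_bigr => l _; rewrite wc_dec /alpha -/(S l) (divfK (lt0r_neq0 (Sp l))) /b; ring.
rewrite big_split /= -!mulr_sumr.
have -> : \sum_(l | l != k) (l == ord_pred k)%:R * (b * (C * z l)) = b * (C * z (ord_pred k)).
  rewrite (bigD1 (ord_pred k)) /= ?pred_neq // eqxx mul1r big1 ?addr0 //.
  by move=> l /andP[_ /negbTE ->]; rewrite mul0r.
have -> : \sum_(l | l != k) z l = Z - z k.
  have hZk : Z = z k + \sum_(l | l != k) z l by rewrite /Z (bigD1 k).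
  by rewrite hZk [z k + _]addrC addrK.
have e : theta * (1 - alpha k) + ((- 1 - delta) * (C * (Z - z k)) + b * (C * z (ord_pred k)))
   = theta - C * D + C * (((1 + delta) - theta / S k) * z k + b * z (ord_pred k) - 1).
  rewrite /alpha /D; ring.
by rewrite e key CD !subrr mulr0 addr0.
Qed.

Lemma comp_X : (forall k, has_full_support_fp (cu_component part G k) eps delta theta) ->
  exists X : V -> R, (forall v, 0 < X v) /\
  (forall k (b : B k), X (val b) = \sum_(c : B k) W (val b) (val c) * X (val c) + theta).
Proof.
move=> hall.
pose xs k := proj1_sig (constructive_indefinite_description _ (hall k)).
have xsP : forall k, is_fixed_point (Wk k) theta (xs k) /\ full_support (xs k).
  by move=> k; rewrite /xs; case: constructive_indefinite_description.
pose X v := xs (part v) (exist _ v (eqxx (part v))).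
have XE : forall k (b : B k), X (val b) = xs k b.
  move=> k [v hv] /=; have e : part v = k by apply/eqP.
  subst k.
  by rewrite /X (bool_irrelevance hv (eqxx _)).
exists X; split.
  by move=> v; rewrite /X; case: (xsP (part v)) => _; apply.
move=> k b; rewrite XE; case: (xsP k) => fx hx; rewrite (fp_eq fx hx).
congr (_ + _); apply: eq_bigr => c _; by rewrite Wk_val XE.
Qed.

Lemma part_ii_exist : (forall k, has_full_support_fp (cu_component part G k) eps delta theta) ->
  exists x, is_fixed_point W theta x /\ full_support x.
Proof. by move=> /comp_X [X [Xp Xeq]]; apply: build_fp. Qed.

Lemma lift_comp j (u : B j -> R[i]) l : (\sum_b u b = 0) ->
  (forall c, \sum_b u b * (((b == c)%:R - Wk j b c)%:C)%C = l * u c) ->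
  (exists t, u t != 0) -> eigfun W l.
Proof.
move=> su hu [t ut].
pose U v := if insub v is Some b then u b else 0 : R[i].
have UE : forall b : B j, U (val b) = u b by move=> b; rewrite /U valK.
have U0 : forall v, part v != j -> U v = 0.
  by move=> v hv; rewrite /U insubF //; apply/negbTE.
exists U; split; first by exists (val t); rewrite UE.
move=> c; rewrite sum_blocks (bigD1 j) //=.
have -> : \sum_(k < m | k != j) \sum_(b : B k) U (val b) * ((((val b == c)%:R - W (val b) c)%:C)%C) = 0.
  apply: big1 => k kj; apply: big1 => b _; rewrite U0 ?mul0r //.
  by rewrite (eqP (valP b)).
rewrite addr0.
under eq_bigr do rewrite UE.
case: (eqVneq (part c) j) => hc.
  pose c' : B j := exist _ c (introT eqP hc).
  have -> : c = val c' by [].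
  rewrite UE -hu; apply: eq_bigr => b _; by rewrite Wk_val val_eqE.
rewrite U0 // mulr0.
have -> : \sum_(b : B j) u b * (((val b == c)%:R - W (val b) c)%:C)%C =
          \sum_(b : B j) u b * (((- wc (part c) j))%:C)%C.
  apply: eq_bigr => b _; have hb : part (val b) = j by apply/eqP; apply: (valP b).
  have -> : (val b == c) = false by apply/negbTE; apply: contra_neq hc => <-.
  rewrite W_cross; last by rewrite hb eq_sym.
  by rewrite hb sub0r.
by rewrite -mulr_suml su mul0r.
Qed.

Lemma row_const j : uniform_in_degree (cu_component part G j) ->
  exists rr : R, forall b : B j, \sum_c ((b == c)%:R - Wk j b c) = rr.
Proof.
case=> d hd.
exists (1 - ((- 1 - delta) * (\sum_(c : B j) (1 : R) - 1) + (delta + eps) * d%:R)) => b.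
rewrite sumrB; congr (_ - _).
  by rewrite (bigD1 b) //= eqxx big1 ?addr0 // => c /negbTE; rewrite eq_sym => ->.
have e : forall c, Wk j b c = (- 1 - delta) * (c != b)%:R + (delta + eps) * (cu_component part G j c b)%:R.
  move=> c; rewrite /ctln eq_sym; case: (eqVneq c b) => [->|cb] /=.
    by rewrite /cu_component Gs mulr0 mulr0 addr0.
  by case: (cu_component part G j c b); rewrite ?mulr1 ?mulr0; lra.
under eq_bigr do rewrite e.
rewrite big_split /= -!mulr_sumr; congr (_ * _ + _ * _).
  have h : \sum_(c : B j) ((c != b)%:R : R) + 1 = \sum_(c : B j) (1 : R).
    rewrite [X in X + 1](bigD1 b) //= [X in _ = X](bigD1 b) //= eqxx add0r addrC.
    by congr (_ + _); apply: eq_bigr => c ->.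
  by rewrite -h addrK.
rewrite -(hd b) -sum1_card natr_sum [RHS]big_mkcond /=; apply: eq_bigr => c _.
by rewrite inE; case: (cu_component part G j c b).
Qed.

Lemma unstable_ii :
  (forall k, has_full_support_fp (cu_component part G k) eps delta theta) ->
  (exists j : 'I_m, uniform_in_degree (cu_component part G j) /\
        (forall x, is_fixed_point (Wk j) theta x -> full_support x -> ~ stable_fp (Wk j) x)) ->
  forall x, full_support x -> ~ stable_fp W x.
Proof.
move=> hall [j [hu hst]] x hx.
have [xj [fj fullj]] := hall j.
have [l [[u [[t ut] heq]] hl]] := eig_of_unstable fullj (hst xj fj fullj).
have [rr hrr] := row_const hu.
have rr0 : 0 < rr.
  have h1 : \sum_(c : B j) ((t == c)%:R : R) = 1.
    by rewrite (bigD1 t) //= eqxx big1 ?addr0 // => c; rewrite eq_sym => /negbTE ->.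
  rewrite -(hrr t); apply: (@lt_le_trans _ _ (\sum_(c : B j) ((t == c)%:R : R))).
    by rewrite h1.
  apply: ler_sum => c _; have := W_le0 (val t) (val c); rewrite -Wk_val; lra.
have su : \sum_b u b = 0.
  have e1 : \sum_c l * u c = ((rr%:C)%C) * \sum_b u b.
    under eq_bigr do rewrite -heq.
    rewrite exchange_big /= mulr_sumr; apply: eq_bigr => b _.
    by rewrite -mulr_sumr -raddf_sum hrr mulrC.
  have ne : l - (rr%:C)%C != 0.
    apply/eqP => e; move: hl; have -> : l = (rr%:C)%C by apply/eqP; rewrite -subr_eq0 e.
    by rewrite Re_real leNgt rr0.
  have : (l - (rr%:C)%C) * \sum_b u b = 0 by rewrite mulrBl -e1 mulr_sumr subrr.
  by move/eqP; rewrite mulf_eq0 (negbTE ne) /= => /eqP.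
apply: (unstable_of_eig hx _ hl).
by apply: (lift_comp su heq); exists t.
Qed.

Lemma part_ii :
  (forall k, has_full_support_fp (cu_component part G k) eps delta theta) ->
  (exists j : 'I_m, uniform_in_degree (cu_component part G j) /\
        (forall x, is_fixed_point (Wk j) theta x -> full_support x -> ~ stable_fp (Wk j) x)) ->
  exists x, [/\ is_fixed_point W theta x, full_support x & ~ stable_fp W x].
Proof.
move=> hall hj; have [x [fx hx]] := part_ii_exist hall.
by exists x; split => //; apply: unstable_ii.
Qed.

Definition nb k : R := \sum_(b : B k) 1.

Lemma nb_ge1 k : 1 <= nb k.
Proof.
have [b0 _] := block_ne k; rewrite /nb (bigD1 b0) //= lerDl.
by apply: sumr_ge0 => c _; apply: ler01.
Qed.

Lemma sum_eqb k (b : B k) : \sum_(c : B k) ((b == c)%:R : R) = 1.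
Proof. by rewrite (bigD1 b) //= eqxx big1 ?addr0 // => c; rewrite eq_sym => /negbTE ->. Qed.

Section Clique.
Hypothesis hcl : forall k, is_clique (cu_component part G k).

Lemma Wk_clique k (b c : B k) : Wk k b c = (- 1 + eps) - (b == c)%:R * (- 1 + eps).
Proof.
rewrite /ctln; case: ifP => [_|/negbT bc]; first by rewrite mul1r subrr.
by have [_ ->] := hcl bc; rewrite mul0r subr0.
Qed.

Lemma clique_fp k : has_full_support_fp (cu_component part G k) eps delta theta.
Proof.
have n1 := nb_ge1 k; have he := e0; have h1 := e1.
have den : 0 < eps + (1 - eps) * nb k.
  have : 0 <= (1 - eps) * nb k by apply: mulr_ge0; lra.
  lra.
pose y0 := theta / (eps + (1 - eps) * nb k).
have y0p : 0 < y0 by apply: divr_gt0.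
have hs : forall b : B k, \sum_c Wk k b c = (- 1 + eps) * nb k - (- 1 + eps).
  move=> b; under eq_bigr do rewrite Wk_clique.
  rewrite sumrB -mulr_suml sum_eqb mul1r /nb mulr_sumr.
  by congr (_ - _); apply: eq_bigr => c _; rewrite mulr1.
exists (fun _ => y0); split; last by move=> b.
apply: fp_of_eq => // b; rewrite -mulr_suml hs.
have : y0 * (eps + (1 - eps) * nb k) = theta by rewrite /y0 divfK // lt0r_neq0.
lra.
Qed.

Lemma sum_eqb' k (b : B k) : \sum_(c : B k) ((c == b)%:R : R) = 1.
Proof. by rewrite (bigD1 b) //= eqxx big1 ?addr0 // => c /negbTE ->. Qed.

Lemma wcprod l k : (2 < m)%N -> l != k -> (1 - eps) * (1 + delta) <= wc l k * wc k l.
Proof.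
move=> m3 lk; rewrite /wc !pred_iff.
have := e0; have := d0; have := e1 => h1 h2 h3.
case: (eqVneq l (ord_pred k)) => [hl|hl]; case: (eqVneq k (ord_pred l)) => [hk|hk] //=.
- by move: (pp_neq k m3); rewrite -hl -hk eqxx.
- nra.
- nra.
- nra.
Qed.

Lemma key_ineq (P Qn W0 : R) : 1 <= P -> 1 <= Qn -> (1 - eps) * (1 + delta) <= W0 ->
  (eps + (1 - eps) * P) * (eps + (1 - eps) * Qn) < W0 * (P * Qn).
Proof.
move=> hP hQ hW.
have := e0; have := d0; have := e1; have := ed => h1 h2 h3 h4.
have h5 : 0 <= (1 - eps) * (delta * ((P - 1) + (Qn - 1)) + (delta + eps) * ((P - 1) * (Qn - 1))).
  apply: mulr_ge0; first lra.
  apply: addr_ge0; first by apply: mulr_ge0; lra.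
  apply: mulr_ge0; first lra.
  by apply: mulr_ge0; lra.
have h6 : 0 <= (W0 - (1 - eps) * (1 + delta)) * (P * Qn).
  by apply: mulr_ge0; [lra | apply: mulr_ge0; lra].
lra.
Qed.

Lemma unstable_iii : (2 < m)%N -> forall x, full_support x -> ~ stable_fp W x.
Proof.
move=> m3 x hx.
have m1 : (1 < m)%N by apply: ltnW.
pose Q : 'M[R]_m := \matrix_(k, l) (if k == l then eps + (1 - eps) * nb k else - wc l k * nb k).
have colsum : forall k c, \sum_(b : B k) ((val b == c)%:R - W (val b) c) = Q k (part c).
  move=> k c; rewrite mxE; case: (eqVneq k (part c)) => hk.
    subst k.
    pose c' : B (part c) := exist _ c (eqxx (part c)).
    have e : forall b : B (part c), ((val b == c)%:R - W (val b) c) = (1 - eps) + (b == c')%:R * eps.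
      move=> b; rewrite -[c]/(val c') val_eqE -Wk_val Wk_clique.
      by case: (b == c'); rewrite /= ?mulr1n ?mulr0n ?mul1r ?mul0r; lra.
    under eq_bigr do rewrite e.
    rewrite big_split /= -mulr_suml sum_eqb' mul1r /nb mulr_sumr.
    under [X in _ + _ = _ + X]eq_bigr do rewrite mulr1.
    by rewrite addrC.
  rewrite /nb mulr_sumr; apply: eq_bigr => b _.
  have hb : part (val b) = k by apply/eqP; apply: (valP b).
  have -> : (val b == c) = false by apply/negbTE; apply: contra_neq hk => <-.
  rewrite W_cross; last by rewrite hb.
  by rewrite hb /= ?mulr0n sub0r mulr1.
have trQ : \tr Q ^+ 2 <= \tr (Q *m Q).
  rewrite expr2 /mxtrace mulr_suml; apply: ler_sum => k _; rewrite mulr_sumr [X in _ <= X]mxE.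
  apply: ler_sum => l _; rewrite !mxE.
  case: (eqVneq k l) => [e|kl]; first by subst l; rewrite eqxx.
  rewrite !eqxx /=.
  have lk : l != k by rewrite eq_sym.
  have h := key_ineq (nb_ge1 k) (nb_ge1 l) (wcprod m3 lk).
  apply: ltW; move: h; rewrite !mulNr mulrN opprK.
  suff -> : wc l k * wc k l * (nb k * nb l) = wc l k * nb k * (wc k l * nb l) by [].
  ring.
have [lam [ev hl]] := crit m1 trQ.
case/eigenvalueP: ev => beta hb bn0.
pose U v := beta 0 (part v).
apply: (unstable_of_eig hx _ hl).
exists U; split.
  have [k bk] : exists k, beta 0 k != 0.
    apply/existsP; apply: contraR bn0 => /existsPn h.
    by apply/eqP/rowP => i; rewrite mxE; apply/eqP; move: (h i); rewrite negbK.
  have [b0 _] := block_ne k.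
  by exists (val b0); rewrite /U (eqP (valP b0)).
move=> c; rewrite sum_blocks.
transitivity (\sum_k beta 0 k * ((Q k (part c))%:C)%C).
  apply: eq_bigr => k _; rewrite -colsum raddf_sum mulr_sumr.
  by apply: eq_bigr => b _; rewrite /U (eqP (valP b)).
move/rowP: hb => /(_ (part c)); rewrite !mxE => <-.
by apply: eq_bigr => k _; rewrite !mxE.
Qed.
End Clique.

Lemma ext_dec k y : (1 < m)%N ->
  ext k y = (- 1 - delta) * (\sum_l bmass l y - bmass k y) + (delta + eps) * bmass (ord_pred k) y.
Proof.
move=> m1; rewrite /ext.
have -> : \sum_(l | l != k) wc l k * bmass l y =
  \sum_(l | l != k) ((- 1 - delta) * bmass l y + (l == ord_pred k)%:R * ((delta + eps) * bmass l y)).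
  by apply: eq_bigr => l _; rewrite wc_dec; ring.
rewrite big_split /= -mulr_sumr.
have -> : \sum_(l | l != k) (l == ord_pred k)%:R * ((delta + eps) * bmass l y) =
          (delta + eps) * bmass (ord_pred k) y.
  rewrite (bigD1 (ord_pred k)) /= ?pred_neq // eqxx mul1r big1 ?addr0 //.
  by move=> l /andP[_ /negbTE ->]; rewrite mul0r.
have hZk : \sum_l bmass l y = bmass k y + \sum_(l | l != k) bmass l y by rewrite (bigD1 k).
by rewrite hZk [bmass k y + _]addrC addrK.
Qed.

Lemma row_sum_id (u : V) (z : V -> R) :
  \sum_t ((u == t)%:R - W u t) * z t = z u - \sum_t W u t * z t.
Proof.
under eq_bigr do rewrite mulrBl.
rewrite sumrB; congr (_ - _).
by rewrite (bigD1 u) //= eqxx mul1r big1 ?addr0 // => t /negbTE; rewrite eq_sym => ->; rewrite mul0r.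
Qed.

Lemma fp_unique (v0 : V) : ctln_nondegenerate W theta ->
  forall x y, is_fixed_point W theta x -> full_support x ->
  is_fixed_point W theta y -> full_support y -> forall v, y v = x v.
Proof.
move=> nd x y fx hx fy hy v.
have ne : [set: V] != set0 by apply/set0Pn; exists v0; rewrite inE.
have [hdet _] := nd [set: V] ne.
set A := 1%:M - subW W [set: V].
have Au : A \in unitmx by rewrite unitmxE unitfE.
pose d : 'cV[R]_#|[set: V]| := \col_i (x (enum_val i) - y (enum_val i)).
have Ad : A *m d = 0.
  apply/colP => i; rewrite !mxE.
  transitivity (\sum_t ((enum_val i == t)%:R - W (enum_val i) t) * (x t - y t)).
    rewrite [RHS]sum_enum; apply: eq_bigr => j _; rewrite !mxE (inj_eq enum_val_inj).
    done.
  rewrite row_sum_id.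
  have ex := fp_eq fx hx (enum_val i); have ey := fp_eq fy hy (enum_val i).
  have -> : \sum_t W (enum_val i) t * (x t - y t) =
            \sum_t W (enum_val i) t * x t - \sum_t W (enum_val i) t * y t.
    by rewrite -sumrB; apply: eq_bigr => t _; rewrite mulrBr.
  lra.
have d0 : d = 0 by rewrite -(mulKmx Au d) Ad mulmx0.
have := congr1 (fun M : 'cV_#|[set: V]| => M (enum_rank_in (in_setT v) v) 0) d0.
rewrite /= !mxE enum_rankK_in ?in_setT //; lra.
Qed.

Section Clique2.
Hypothesis hcl : forall k, is_clique (cu_component part G k).

Lemma W_blk k v (b : B k) : part v = k -> W v (val b) = (- 1 + eps) - (val b == v)%:R * (- 1 + eps).
Proof.
move=> hv; pose v' : B k := exist _ v (introT eqP hv).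
rewrite -[v]/(val v') -Wk_val (Wk_clique hcl) val_eqE eq_sym //.
Qed.

Lemma full_of_fp : (1 < m)%N -> forall y, is_fixed_point W theta y -> full_support y.
Proof.
move=> m1 y fy; have [y0 hfy] := fy.
pose Y k := bmass k y.
pose T := \sum_l Y l.
pose h k := theta + (- 1 + eps) * Y k + ext k y.
have Yge : forall k, 0 <= Y k by move=> k; apply: sumr_ge0 => b _.
have rowv : forall k v, part v = k -> \sum_j W v j * y j + theta = h k + (1 - eps) * y v.
  move=> k v hv; rewrite (split_row _ hv).
  have -> : \sum_(b : B k) W v (val b) * y (val b) = (- 1 + eps) * Y k - (- 1 + eps) * y v.
    under eq_bigr do rewrite (W_blk _ hv) mulrBl.
    rewrite sumrB -mulr_sumr; congr (_ - _).
    pose v' : B k := exist _ v (introT eqP hv).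
    rewrite (bigD1 v') //= eqxx mul1r big1 ?addr0 //.
    by move=> b bv; rewrite -[v]/(val v') val_eqE (negbTE bv) mul0r mul0r.
  rewrite /h; lra.
have he := e0; have h1 := e1.
have dich : forall k v, part v = k -> (0 < h k /\ eps * y v = h k) \/ (h k <= 0 /\ y v = 0).
  move=> k v hv; have := hfy v; rewrite (rowv k v hv); have := y0 v.
  case: (lerP 0 (h k + (1 - eps) * y v)) => hp yv e.
    have ee : eps * y v = h k by lra.
    case: (ltrP 0 (h k)) => hk; first by left.
    right; split => //; have : eps * y v <= 0 by lra.
    by rewrite pmulr_rle0 // => hy; apply/le_anti; rewrite hy yv.
  by right; split => //; move: hp; rewrite e mulr0 addr0 => /ltW.
have blk : forall k, (0 < h k /\ eps * Y k = nb k * h k) \/ (h k <= 0 /\ Y k = 0).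
  move=> k; case: (ltrP 0 (h k)) => hk.
    left; split => //; rewrite /Y /bmass /nb mulr_sumr mulr_suml; apply: eq_bigr => b _.
    case: (dich k (val b) (eqP (valP b))) => [[_ ->]|[hk' _]]; first by rewrite mul1r.
    by have := lt_le_trans hk hk'; rewrite ltxx.
  right; split => //; rewrite /Y /bmass; apply: big1 => b _.
  by case: (dich k (val b) (eqP (valP b))) => [[hk' _]|[_ ->]] //; have := le_lt_trans hk hk'; rewrite ltxx.
have hform : forall k, h k = theta - (1 + delta) * T + (delta + eps) * (Y k + Y (ord_pred k)).
  by move=> k; rewrite /h ext_dec // -/(Y k) -/(Y (ord_pred k)) /T /Y; lra.
have allpos : forall k, 0 < h k.
  move=> k0; case: (ltrP 0 (h k0)) => // hk0; exfalso.
  case: (boolP [exists k, 0 < h k]) => [/existsP [k1 hk1]|/existsPn none].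
    have nk0 : ~~ (0 < h k0) by rewrite -leNgt.
    have [k [hk hpk]] := @boundary m (fun k => 0 < h k) (ex_intro _ k1 hk1) (ex_intro _ k0 nk0).
    rewrite /= -leNgt in hpk.
    have Ypk : Y (ord_pred k) = 0.
      case: (blk (ord_pred k)) => [[h' _]|[_ ->]] //.
      by have := le_lt_trans hpk h'; rewrite ltxx.
    pose k' := ordS k.
    have e1' : h k' = h k + (delta + eps) * Y k'.
      by rewrite !hform /k' ordSK Ypk; ring.
    have Yk' := Yge k'.
    have db : 0 < delta + eps by have := d0; lra.
    have hk' : 0 < h k'.
      have : 0 <= (delta + eps) * Y k' by apply: mulr_ge0 => //; apply: ltW.
      by rewrite e1'; lra.
    have e2 : eps * Y k' = nb k' * h k'.
      case: (blk k') => [[_ ->]|[h' _]] //.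
      by have := le_lt_trans h' hk'; rewrite ltxx.
    have n1 := nb_ge1 k'.
    have p1 : 0 < ((delta + eps) * nb k' - eps) * h k'.
      apply: mulr_gt0 => //.
      have : (delta + eps) * 1 <= (delta + eps) * nb k' by rewrite ler_pM2l.
      have := d0; lra.
    have p2 : 0 < eps * h k by apply: mulr_gt0.
    have e3 : eps * h k' = eps * h k + (delta + eps) * (eps * Y k') by rewrite e1'; ring.
    rewrite e2 in e3; lra.
  have Y0 : forall k, Y k = 0.
    move=> k; case: (blk k) => [[hk _]|[_ ->]] //.
    by move: (none k); rewrite hk.
  have T0 : T = 0 by rewrite /T big1.
  by move: hk0; rewrite hform T0 !Y0 !(mulr0, addr0, subr0) leNgt th0.
move=> v; case: (dich _ v erefl) => [[hp e]|[hk _]].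
  by have := allpos (part v); rewrite -e pmulr_rgt0.
by have := allpos (part v); rewrite ltNge hk.
Qed.
End Clique2.

Lemma part_iii : ctln_nondegenerate W theta -> (2 < m)%N ->
  (forall k : 'I_m, is_clique (cu_component part G k)) ->
  exists x, [/\ is_fixed_point W theta x, full_support x, ~ stable_fp W x
             & forall y, is_fixed_point W theta y -> forall i, y i = x i].
Proof.
move=> nd m3 hcl.
have [x [fx hx]] := part_ii_exist (fun k => clique_fp hcl k).
exists x; split => //; first exact: (unstable_iii hcl m3 hx).
move=> y fy i; have hy := full_of_fp hcl (ltnW m3) fy.
exact: (fp_unique i nd fx hx fy hy i).
Qed.

Lemma part_iv :
   (((exists k : 'I_m, ~ has_full_support_fp (cu_component part G k) eps delta theta)
     \/ ((forall k : 'I_m, has_full_support_fp (cu_component part G k) eps delta theta) /\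
         (exists k : 'I_m,
            uniform_in_degree (cu_component part G k) /\
            (forall x, is_fixed_point (ctln (cu_component part G k) eps delta) theta x ->
                       full_support x ->
                       ~ stable_fp (ctln (cu_component part G k) eps delta) x)))
     \/ ((2 < m)%N /\ forall k : 'I_m, is_clique (cu_component part G k))) ->
    ~ stable_motif G eps delta theta).
Proof.
move=> [h1|[[hall hj]|[m3 hcl]]] [x [fx hx st]].
- by apply: (part_i h1); exists x; split.
- exact: (unstable_ii hall hj hx st).
- exact: (unstable_iii hcl m3 hx st).
Qed.

End Main.

Unset Implicit Arguments.

Theorem theorem5 (R : realType) (V : finType) (m : nat) (part : V -> 'I_m)
  (G : rel V) (eps delta theta : R) :
  simple_graph G ->
  cyclic_union part G ->
  legal_params eps delta ->
  0 < theta ->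
  ctln_nondegenerate (ctln G eps delta) theta ->
  (forall k : 'I_m, ctln_nondegenerate (ctln (cu_component part G k) eps delta) theta) ->
  [/\
   (* (i) *)
   ((exists k : 'I_m, ~ has_full_support_fp (cu_component part G k) eps delta theta) ->
      ~ has_full_support_fp G eps delta theta),
   (* (ii) *)
   ((forall k : 'I_m, has_full_support_fp (cu_component part G k) eps delta theta) ->
    (exists k : 'I_m,
        uniform_in_degree (cu_component part G k) /\
        (forall x, is_fixed_point (ctln (cu_component part G k) eps delta) theta x ->
                   full_support x ->
                   ~ stable_fp (ctln (cu_component part G k) eps delta) x)) ->
    exists x, [/\ is_fixed_point (ctln G eps delta) theta x, full_support x
               & ~ stable_fp (ctln G eps delta) x]),
   (* (iii) *)
   ((2 < m)%N -> (forall k : 'I_m, is_clique (cu_component part G k)) ->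
    exists x, [/\ is_fixed_point (ctln G eps delta) theta x, full_support x,
                 ~ stable_fp (ctln G eps delta) x
               & forall y, is_fixed_point (ctln G eps delta) theta y ->
                           forall i, y i = x i])
   & (* in particular *)
   (((exists k : 'I_m, ~ has_full_support_fp (cu_component part G k) eps delta theta)
     \/ ((forall k : 'I_m, has_full_support_fp (cu_component part G k) eps delta theta) /\
         (exists k : 'I_m,
            uniform_in_degree (cu_component part G k) /\
            (forall x, is_fixed_point (ctln (cu_component part G k) eps delta) theta x ->
                       full_support x ->
                       ~ stable_fp (ctln (cu_component part G k) eps delta) x)))
     \/ ((2 < m)%N /\ forall k : 'I_m, is_clique (cu_component part G k))) ->
    ~ stable_motif G eps delta theta)].
Proof.
move=> Gs cu lp th0 nd ndk.
split.
- exact: (part_i cu).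
- exact: (part_ii Gs cu lp th0).
- by apply: part_iii.
- by apply: part_iv.
Qed.
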